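(* Let $\sigma\in\mathcal T$ be an admissible type. For any $0\le r_1<r_2$ there is $\alpha\in\mathbb Q_+$ such that $\rho_{\mathrm{Id}}(r_1)\le(\alpha\cdot\sigma)(1,0)\le\omega_{\mathrm{Id}}(r_2)$.
   Context: Standing setting: $(X,\|\cdot\|)$ is a separable infinite-dimensional Banach space and $d$ is a translation-invariant stable pseudometric on $X$ such that $\mathrm{Id}\colon(X,\|\cdot\|)\to(X,d)$ is a coarse equivalence, with $\omega_{\mathrm{Id}}(t)=\sup\{d(x,y):\|x-y\|\le t\}$, $\rho_{\mathrm{Id}}(t)=\inf\{d(x,y):\|x-y\|\ge t\}$. $\Delta$ is a countable $\|\cdot\|$-dense $\mathbb Q$-linear subspace; $\bar x(\lambda,y)=d(\lambda x,y)$; $\mathcal T$ is the pointwise closure of $\{\bar x:x\in\Delta\}$ in $\mathbb R^{\mathbb Q\times\Delta}$; a defining sequence for $\sigma$ is $(x_n)\subseteq\Delta$ with $\bar x_n\to\sigma$. Dilation: for $\alpha\in\mathbb Q$, $\alpha\cdot\sigma=\lim_n\overline{\alpha x_n}$ for any defining sequence $(x_n)$ of $\sigma$; equivalently $(\alpha\cdot\sigma)(\lambda,x)=\sigma(\lambda\alpha,x)$. With $\gamma=\inf_{t>0}\omega_{\mathrm{Id}}(t)$, a type $\sigma$ is admissible if $\sigma(1,0)>\gamma$. *)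

(* Defs.v *)
From Stdlib Require Import Reals Lra QArith Qreals List ClassicalEpsilon.
Open Scope R_scope.

Record NormedSpace := {
  carrier :> Type;
  vzero : carrier;
  vadd : carrier -> carrier -> carrier;
  vopp : carrier -> carrier;
  vscal : R -> carrier -> carrier;
  vnorm : carrier -> R;
  vadd_assoc : forall x y z, vadd x (vadd y z) = vadd (vadd x y) z;
  vadd_comm : forall x y, vadd x y = vadd y x;
  vadd_0l : forall x, vadd vzero x = x;
  vadd_oppl : forall x, vadd (vopp x) x = vzero;
  vscal_1 : forall x, vscal 1 x = x;
  vscal_assoc : forall a b x, vscal a (vscal b x) = vscal (a * b) x;
  vscal_addr : forall a x y, vscal a (vadd x y) = vadd (vscal a x) (vscal a y);
  vscal_addl : forall a b x, vscal (a + b) x = vadd (vscal a x) (vscal b x);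
  vnorm_eq0 : forall x, vnorm x = 0 -> x = vzero;
  vnorm_scal : forall a x, vnorm (vscal a x) = Rabs a * vnorm x;
  vnorm_triangle : forall x y, vnorm (vadd x y) <= vnorm x + vnorm y
}.

Arguments vzero {n}.
Arguments vadd {n}.
Arguments vopp {n}.
Arguments vscal {n}.
Arguments vnorm {n}.

Definition vsub {X : NormedSpace} (x y : X) : X := vadd x (vopp y).

Definition complete (X : NormedSpace) : Prop :=
  forall u : nat -> X,
    (forall eps, 0 < eps -> exists N, forall n m, (N <= n)%nat -> (N <= m)%nat ->
        vnorm (vsub (u n) (u m)) < eps) ->
    exists l : X, forall eps, 0 < eps -> exists N, forall n, (N <= n)%nat ->
        vnorm (vsub (u n) l) < eps.

Definition separable (X : NormedSpace) : Prop :=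
  exists e : nat -> X, forall x eps, 0 < eps -> exists n, vnorm (vsub x (e n)) < eps.

Definition lincomb {X : NormedSpace} (L : list (R * X)) : X :=
  fold_right (fun p acc => vadd (vscal (fst p) (snd p)) acc) vzero L.

Definition infinite_dimensional (X : NormedSpace) : Prop :=
  forall l : list X, exists x : X,
    forall L : list (R * X), (forall p, In p L -> In (snd p) l) -> x <> lincomb L.

Definition pseudometric {X : Type} (d : X -> X -> R) : Prop :=
  (forall x, d x x = 0) /\ (forall x y, d x y = d y x) /\
  (forall x y z, d x z <= d x y + d y z).

Definition translation_invariant {X : NormedSpace} (d : X -> X -> R) : Prop :=
  forall x y z, d (vadd x z) (vadd y z) = d x y.

Definition seq_lim (u : nat -> R) (l : R) : Prop :=
  forall eps, 0 < eps -> exists N, forall n, (N <= n)%nat -> Rabs (u n - l) < eps.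

(* Stability (Krivine–Maurey): for d-bounded sequences, iterated limits
   commute whenever both exist. *)
Definition stable {X : NormedSpace} (d : X -> X -> R) : Prop :=
  forall (x y : nat -> X) (M : R),
    (forall n, d (x n) vzero <= M) -> (forall m, d (y m) vzero <= M) ->
    forall (a b : R) (ra : nat -> R) (cb : nat -> R),
      (forall n, seq_lim (fun m => d (x n) (y m)) (ra n)) -> seq_lim ra a ->
      (forall m, seq_lim (fun n => d (x n) (y m)) (cb m)) -> seq_lim cb b ->
      a = b.

(* Id : (X,||.||) -> (X,d) is a coarse equivalence: Id and its inverse Id
   are both uniformly bornologous (coarse), Id being a bijection. *)
Definition id_coarse_equivalence {X : NormedSpace} (d : X -> X -> R) : Prop :=
  (forall t, exists M, forall x y : X, vnorm (vsub x y) <= t -> d x y <= M) /\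
  (forall s, exists t, forall x y : X, d x y <= s -> vnorm (vsub x y) <= t).

Definition is_glb (E : R -> Prop) (m : R) : Prop :=
  (forall x, E x -> m <= x) /\ (forall b, (forall x, E x -> b <= x) -> b <= m).

Definition Rsup (E : R -> Prop) : R := epsilon (inhabits 0) (fun s => is_lub E s).
Definition Rinf (E : R -> Prop) : R := epsilon (inhabits 0) (fun s => is_glb E s).

Definition omega_Id {X : NormedSpace} (d : X -> X -> R) (t : R) : R :=
  Rsup (fun r => exists x y : X, vnorm (vsub x y) <= t /\ r = d x y).

Definition rho_Id {X : NormedSpace} (d : X -> X -> R) (t : R) : R :=
  Rinf (fun r => exists x y : X, t <= vnorm (vsub x y) /\ r = d x y).

Definition gamma_Id {X : NormedSpace} (d : X -> X -> R) : R :=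
  Rinf (fun r => exists t, 0 < t /\ r = omega_Id d t).

Definition countable_dense_Qsubspace {X : NormedSpace} (Delta : X -> Prop) : Prop :=
  (exists e : nat -> X, forall x, Delta x <-> exists n, e n = x) /\
  (forall x eps, 0 < eps -> exists y, Delta y /\ vnorm (vsub x y) < eps) /\
  Delta vzero /\
  (forall x y, Delta x -> Delta y -> Delta (vadd x y)) /\
  (forall (q : Q) x, Delta x -> Delta (vscal (Q2R q) x)).

Definition xbar {X : NormedSpace} (d : X -> X -> R) (x : X) : Q -> X -> R :=
  fun lam y => d (vscal (Q2R lam) x) y.

(* sigma lies in the pointwise (product-topology) closure in R^(Q x Delta)
   of { xbar x : x in Delta }. *)
Definition in_T {X : NormedSpace} (d : X -> X -> R) (Delta : X -> Prop)
  (sigma : Q -> X -> R) : Prop :=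
  forall F : list (Q * X), (forall p, In p F -> Delta (snd p)) ->
  forall eps, 0 < eps ->
  exists x, Delta x /\
    forall p, In p F -> Rabs (xbar d x (fst p) (snd p) - sigma (fst p) (snd p)) < eps.

Definition dil {X : Type} (alpha : Q) (sigma : Q -> X -> R) : Q -> X -> R :=
  fun lam y => sigma (lam * alpha)%Q y.

Definition admissible {X : NormedSpace} (d : X -> X -> R) (sigma : Q -> X -> R) : Prop :=
  gamma_Id d < sigma 1%Q vzero.

(* Main.v *)
Require Import Defs.
From Stdlib Require Import Reals QArith Qreals.
From Stdlib Require Import Lra Lia ZArith Classical ClassicalEpsilon List.
Open Scope R_scope.

Lemma Q_dense (a b : R) : a < b -> exists q : Q, a < Q2R q < b.
Proof.
  intros Hab.
  pose (k := up (/ (b - a))).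
  destruct (archimed (/ (b-a))) as [Hk1 Hk2].
  assert (Hpos : 0 < / (b - a)) by (apply Rinv_0_lt_compat; lra).
  fold k in Hk1, Hk2.
  destruct k as [|p|p] eqn:Ek.
  - simpl in Hk1; lra.
  - destruct (archimed (a * IZR (Zpos p))) as [Hm1 Hm2].
    exists (Qmake (up (a * IZR (Zpos p))) p).
    unfold Q2R; simpl.
    assert (Hp : 0 < IZR (Zpos p)) by (apply IZR_lt; lia).
    set (m := IZR (up (a * IZR (Zpos p)))) in *.
    assert (Hba : 1 < (b - a) * IZR (Zpos p)).
    { apply Rmult_lt_compat_l with (r := b - a) in Hk1; [|lra].
      rewrite Rinv_r in Hk1; lra. }
    split.
    + apply Rmult_lt_reg_r with (IZR (Zpos p)); [lra|].
      rewrite Rmult_assoc, Rinv_l by lra. lra.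
    + apply Rmult_lt_reg_r with (IZR (Zpos p)); [lra|].
      rewrite Rmult_assoc, Rinv_l by lra. nra.
  - assert (IZR (Zneg p) < 0) by (apply IZR_lt; lia). lra.
Qed.

Lemma lub_ex (E : R -> Prop) : bound E -> (exists x, E x) -> is_lub E (Rsup E).
Proof.
  intros Hb Hn. destruct (completeness E Hb Hn) as [m Hm].
  unfold Rsup. apply epsilon_spec. exists m; exact Hm.
Qed.

Lemma glb_ex (E : R -> Prop) (b : R) : (forall x, E x -> b <= x) -> (exists x, E x) ->
  is_glb E (Rinf E).
Proof.
  intros Hb [x0 Hx0].
  destruct (completeness (fun y => E (- y))) as [m [Hm1 Hm2]].
  - exists (- b). intros y Hy. apply Hb in Hy. lra.
  - exists (- x0). rewrite Ropp_involutive. exact Hx0.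
  - unfold Rinf. apply epsilon_spec. exists (- m). split.
    + intros x Hx. assert (- x <= m); [|lra]. apply Hm1. rewrite Ropp_involutive; exact Hx.
    + intros b' Hb'. assert (m <= - b'); [|lra]. apply Hm2. intros y Hy.
      apply Hb' in Hy. lra.
Qed.

Section Aux.
Variable X : NormedSpace.

Lemma vopp0 : vopp (@vzero X) = vzero.
Proof.
  pose proof (vadd_oppl X vzero) as H. rewrite vadd_comm, vadd_0l in H. exact H.
Qed.

Lemma vsub0 (x : X) : vsub x vzero = x.
Proof. unfold vsub. rewrite vopp0, vadd_comm, vadd_0l. reflexivity. Qed.

Lemma vscal0 (x : X) : vscal 0 x = vzero.
Proof.
  set (z := vscal 0 x).
  assert (Hz : vadd z z = z).
  { unfold z. rewrite <- vscal_addl. f_equal. lra. }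
  assert (H : vadd (vopp z) (vadd z z) = vadd (vopp z) z) by (rewrite Hz; reflexivity).
  rewrite vadd_assoc, vadd_oppl, vadd_0l in H. exact H.
Qed.

Lemma vnorm0 : vnorm (@vzero X) = 0.
Proof.
  rewrite <- (vscal0 vzero), vnorm_scal, Rabs_R0. lra.
Qed.
End Aux.

Definition approx {X : NormedSpace} (d : X -> X -> R) (sigma : Q -> X -> R)
  (F : list (Q * X)) (eps : R) (x : X) : Prop :=
  forall p, In p F -> Rabs (xbar d x (fst p) (snd p) - sigma (fst p) (snd p)) < eps.

Theorem lemma5p2 (X : NormedSpace) (d : X -> X -> R) (Delta : X -> Prop)
  (Hcompl : complete X) (Hsep : separable X) (Hinf : infinite_dimensional X)
  (Hpm : pseudometric d) (Hti : translation_invariant d) (Hst : stable d)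
  (Hce : id_coarse_equivalence d) (HDelta : countable_dense_Qsubspace Delta)
  (sigma : Q -> X -> R) (HT : in_T d Delta sigma) (Hadm : admissible d sigma) :
  forall r1 r2 : R, 0 <= r1 -> r1 < r2 ->
  exists alpha : Q, (0 < alpha)%Q /\
    rho_Id d r1 <= dil alpha sigma 1%Q vzero /\
    dil alpha sigma 1%Q vzero <= omega_Id d r2.
Proof.
  intros r1 r2 H1 H12.
  destruct Hpm as [Hdd [Hsym Htri]].
  assert (Hd0 : forall x y, 0 <= d x y).
  { intros x y. pose proof (Htri x y x). rewrite Hdd, (Hsym y x) in H. lra. }
  destruct HDelta as [_ [_ [HD0 _]]].
  assert (Homega : forall t, 0 <= t -> is_lub (fun r => exists x y : X, vnorm (vsub x y) <= t /\ r = d x y) (omega_Id d t)).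
  { intros t Ht. apply lub_ex.
    - destruct (proj1 Hce t) as [M HM]. exists M. intros r [x [y [Hxy ->]]]. apply HM; exact Hxy.
    - exists (d vzero vzero). exists vzero, vzero. rewrite vsub0, vnorm0. split; [lra|reflexivity]. }
  assert (Hom_ge : forall t x y, 0 <= t -> vnorm (vsub x y) <= t -> d x y <= omega_Id d t).
  { intros t x y Ht Hxy. apply (proj1 (Homega t Ht)). exists x, y. split; auto. }
  assert (Hom_nn : forall t, 0 <= t -> 0 <= omega_Id d t).
  { intros t Ht. pose proof (Hom_ge t vzero vzero Ht) as H. rewrite vsub0, vnorm0, Hdd in H. auto. }
  set (a := sigma 1%Q vzero) in *.
  assert (Ht0 : exists t0, 0 < t0 /\ omega_Id d t0 < a).
  { apply NNPP. intro Hn.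
    assert (Hg : is_glb (fun r => exists t, 0 < t /\ r = omega_Id d t) (gamma_Id d)).
    { apply glb_ex with 0.
      - intros r [t [Ht ->]]. apply Hom_nn; lra.
      - exists (omega_Id d 1). exists 1. split; [lra|reflexivity]. }
    assert (a <= gamma_Id d); [|unfold admissible in Hadm; fold a in Hadm; lra].
    apply (proj2 Hg). intros r [t [Ht ->]].
    apply Rnot_lt_le. intro Hlt. apply Hn. exists t. split; auto. }
  destruct Ht0 as [t0 [Ht0 Hwt0]].
  assert (Hxbar1 : forall x, xbar d x 1%Q vzero = d x vzero).
  { intros x. unfold xbar. rewrite RMicromega.Q2R_1, vscal_1. reflexivity. }
  destruct (proj2 Hce (a + 1)) as [T HTb].
  set (P := fun s => forall eps, 0 < eps -> forall F : list (Q * X), (forall p, In p F -> Delta (snd p)) ->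
        exists x, Delta x /\ approx d sigma F eps x /\ s <= vnorm x).
  assert (Pdown : forall s s', s' <= s -> P s -> P s').
  { intros s s' Hs HP eps He F HF. destruct (HP eps He F HF) as [x [? [? ?]]].
    exists x. repeat split; auto. lra. }
  assert (Pt0 : P t0).
  { intros eps He F HF.
    destruct (HT ((1%Q, vzero) :: F)) with (eps := Rmin eps (a - omega_Id d t0)) as [x [Hx Hap]].
    - intros p [<-|Hp]; simpl; auto.
    - apply Rmin_pos; lra.
    - exists x. split; auto. split.
      + intros p Hp. eapply Rlt_le_trans; [apply Hap; right; exact Hp| apply Rmin_l].
      + pose proof (Hap (1%Q, vzero) (or_introl eq_refl)) as H. simpl in H.
        rewrite Hxbar1 in H. fold a in H.
        pose proof (Rmin_r eps (a - omega_Id d t0)).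
        apply Rnot_lt_le. intro Hlt.
        assert (d x vzero <= omega_Id d t0) by (apply Hom_ge; [lra| rewrite vsub0; lra]).
        apply Rabs_def2 in H. lra. }
  assert (PT : forall s, P s -> s <= T).
  { intros s Hs. destruct (Hs 1 ltac:(lra) ((1%Q, vzero) :: nil)) as [x [_ [Hap Hsx]]].
    - intros p [<-|[]]; simpl; auto.
    - pose proof (Hap (1%Q, vzero) (or_introl eq_refl)) as H. simpl in H.
      rewrite Hxbar1 in H. fold a in H. apply Rabs_def2 in H.
      assert (vnorm (vsub x vzero) <= T) by (apply HTb; lra).
      rewrite vsub0 in H0. lra. }
  assert (HL : is_lub P (Rsup P)).
  { apply lub_ex. exists T. exact PT. exists t0. exact Pt0. }
  set (L := Rsup P) in *.
  assert (HtL : t0 <= L) by (apply (proj1 HL); exact Pt0).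
  assert (HLp : 0 < L) by lra.
  destruct (Q_dense (r1 / L) (r2 / L)) as [q [Hq1 Hq2]].
  { unfold Rdiv. apply Rmult_lt_compat_r; [apply Rinv_0_lt_compat; lra| lra]. }
  assert (Hr1L : 0 <= r1 / L) by (unfold Rdiv; apply Rmult_le_pos; [lra| left; apply Rinv_0_lt_compat; lra]).
  set (c := Q2R q) in *.
  assert (Hc : 0 < c) by lra.
  assert (HcL1 : r1 < c * L).
  { apply Rmult_lt_compat_r with (r := L) in Hq1; [|lra].
    unfold Rdiv in Hq1. rewrite Rmult_assoc, Rinv_l in Hq1 by lra. lra. }
  assert (HcL2 : c * L < r2).
  { apply Rmult_lt_compat_r with (r := L) in Hq2; [|lra].
    unfold Rdiv in Hq2. rewrite Rmult_assoc, Rinv_l in Hq2 by lra. lra. }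
  set (s1 := r1 / c). set (s2 := r2 / c).
  assert (Hs1 : c * s1 = r1) by (unfold s1; field; lra).
  assert (Hs2 : c * s2 = r2) by (unfold s2; field; lra).
  assert (Hs1L : s1 < L) by nra.
  assert (Hs2L : L < s2) by nra.
  assert (Ps1 : P s1).
  { apply NNPP. intro Hn. assert (L <= s1); [|lra]. apply (proj2 HL).
    intros s Hs. apply Rnot_lt_le. intro Hlt. apply Hn. apply (Pdown s); auto; lra. }
  assert (nPs2 : ~ P s2).
  { intro Hp. apply (proj1 HL) in Hp. lra. }
  assert (Hq0 : (0 < q)%Q).
  { apply Rlt_Qlt. unfold Q2R at 1. simpl. fold c. lra. }
  exists q. split; [exact Hq0|].
  unfold dil.
  assert (Hxq : forall x, xbar d x (1 * q)%Q vzero = d (vscal c x) vzero).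
  { intros x. unfold xbar. rewrite Q2R_mult, RMicromega.Q2R_1, Rmult_1_l. reflexivity. }
  assert (Hnq : forall x : X, vnorm (vsub (vscal c x) vzero) = c * vnorm x).
  { intros x. rewrite vsub0, vnorm_scal, Rabs_pos_eq; lra. }
  assert (HDF : forall F : list (Q * X), (forall p, In p F -> Delta (snd p)) ->
             forall p, In p (((1 * q)%Q, vzero) :: F) -> Delta (snd p)).
  { intros F HF p [<-|Hp]; simpl; auto. }
  split.
  -
    destruct (Ps1 1 ltac:(lra) nil (fun p (H : In p nil) => match H with end)) as [x0 [_ [_ Hx0]]].
    assert (Hg : is_glb (fun r => exists x y : X, r1 <= vnorm (vsub x y) /\ r = d x y) (rho_Id d r1)).
    { apply glb_ex with 0.
      - intros r [x [y [_ ->]]]. auto.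
      - exists (d (vscal c x0) vzero). exists (vscal c x0), vzero. split; auto.
        rewrite Hnq. nra. }
    apply Rnot_lt_le. intro Hlt.
    set (e := sigma (1 * q)%Q vzero) in *.
    destruct (Ps1 (rho_Id d r1 - e) ltac:(lra) (((1 * q)%Q, vzero) :: nil)) as [x [_ [Hap Hx]]].
    { apply HDF. intros p []. }
    pose proof (Hap _ (or_introl eq_refl)) as H. simpl in H. rewrite Hxq in H. fold e in H.
    apply Rabs_def2 in H.
    assert (rho_Id d r1 <= d (vscal c x) vzero).
    { apply (proj1 Hg). exists (vscal c x), vzero. split; auto. rewrite Hnq. nra. }
    lra.
  -
    assert (Hex : exists eps0, 0 < eps0 /\ exists F0 : list (Q * X), (forall p, In p F0 -> Delta (snd p)) /\
               forall x, Delta x -> approx d sigma F0 eps0 x -> vnorm x < s2).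
    { apply NNPP. intro Hn. apply nPs2. intros eps He F HF.
      apply NNPP. intro Hn2. apply Hn. exists eps. split; auto. exists F. split; auto.
      intros x Hx Hap. apply Rnot_le_lt. intro Hle. apply Hn2. exists x. auto. }
    destruct Hex as [eps0 [He0 [F0 [HF0 Hb0]]]].
    apply Rnot_lt_le. intro Hlt.
    set (e := sigma (1 * q)%Q vzero) in *.
    destruct (HT (((1 * q)%Q, vzero) :: F0) (HDF F0 HF0) (Rmin (e - omega_Id d r2) eps0))
      as [x [Hx Hap]].
    { apply Rmin_pos; lra. }
    assert (Hn : vnorm x < s2).
    { apply Hb0; auto. intros p Hp. eapply Rlt_le_trans; [apply Hap; right; exact Hp| apply Rmin_r]. }
    pose proof (Hap _ (or_introl eq_refl)) as H. simpl in H. rewrite Hxq in H. fold e in H.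
    apply Rabs_def2 in H. pose proof (Rmin_l (e - omega_Id d r2) eps0).
    assert (d (vscal c x) vzero <= omega_Id d r2).
    { apply Hom_ge; [lra|]. rewrite Hnq. nra. }
    lra.
Qed.
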